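(* Let $G$ be a bus graph containing an $(I,O)$-chain (as defined below). Then in any realization $\Gamma$ of $G$, $\Gamma(I)$ and $\Gamma(O)$ are parallel.
   Context: A bus graph is a finite bipartite graph $G=(\mathcal{B},\mathcal{C};\mathcal{E})$ with $\deg(c)\le 4$ for all $c\in\mathcal{C}$. A realization $\Gamma$ of $G$ in the integer grid is a drawing such that: (1) each $B\in\mathcal{B}$ is drawn as a closed line segment $\Gamma(B)$ along a grid line (a ''bus''); (2) each $c\in\mathcal{C}$ is drawn as a grid point $\Gamma(c)$; (3) each edge $(B,c)\in\mathcal{E}$ is drawn as a closed line segment along a grid line between a point of $\Gamma(B)$ and $\Gamma(c)$, perpendicular to $\Gamma(B)$, containing no connectors or buses other than $\Gamma(B)$ and $\Gamma(c)$ (edges may cross other edges); (4) no two buses or connectors intersect. An $(A,B)$-perp consists of three distinct $\mathcal{C}$-vertices $x,y,z$, five distinct $\mathcal{B}$-vertices $A,A',B,B',C$, and the twelve edges $(A,x),(A',x),(B,x),(B',x)$, $(A,y),(A',y),(B,y),(C,y)$, $(A,z),(A',z),(B',z),(C,z)$ (for different names substitute accordingly, e.g. an $(I_3,O)$-perp has $I_3$ in the role of $A$ and $O$ in the role of $B$). A $(B,o)$-flipper consists of an $(A,B)$-perp (for some fresh $A$) together with an additional $\mathcal{C}$-vertex $o$ and additional edges $(B,o),(B',o)$. An $(I,O)$-chain consists of vertex-disjoint copies of an $(I,o_1)$-flipper, an $(I_1,o_2)$-flipper, an $(I_2,o_3)$-flipper and an $(I_3,O)$-perp, together with the three additional edges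 $(I_1,o_1),(I_2,o_2),(I_3,o_3)$. *)

(* Defs.v *)
From mathcomp Require Import all_boot all_order all_algebra.
Set Implicit Arguments. Unset Strict Implicit. Unset Printing Implicit Defensive.
Import Order.TTheory GRing.Theory Num.Theory.
Local Open Scope ring_scope.

(* A bus graph: finite bipartite graph with sides Bt (buses) and Ct
   (connectors), edge relation E, and every connector of degree <= 4. *)
Definition bus_graph (Bt Ct : finType) (E : Bt -> Ct -> bool) : Prop :=
  forall c : Ct, (#|[set b | E b c]| <= 4)%N.

Definition gpoint := (int * int)%type.

(* A closed axis-parallel segment on a grid line:
   if [horiz], it is {(t, line) | lo <= t <= hi}, else {(line, t) | lo <= t <= hi}. *)
Record gseg := GSeg { horiz : bool; line : int; lo : int; hi : int }.

Definition on_gseg (s : gseg) (p : gpoint) : bool :=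
  if horiz s then (p.2 == line s) && (lo s <= p.1 <= hi s)
  else (p.1 == line s) && (lo s <= p.2 <= hi s).

Definition foot (s : gseg) (p : gpoint) : gpoint :=
  if horiz s then (p.1, line s) else (line s, p.2).

(* r lies on the closed segment between p and q (exact for axis-parallel
   segments, which is the only case used) *)
Definition in_seg (p q r : gpoint) : bool :=
  (Num.min p.1 q.1 <= r.1 <= Num.max p.1 q.1) &&
  (Num.min p.2 q.2 <= r.2 <= Num.max p.2 q.2).

Record drawing (Bt Ct : finType) := Drawing {
  gbus : Bt -> gseg;
  gcon : Ct -> gpoint }.

Definition realization (Bt Ct : finType) (E : Bt -> Ct -> bool)
  (G : drawing Bt Ct) : Prop :=
  (forall b, lo (gbus G b) < hi (gbus G b)) /\
  (* (3) each edge (b,c) is the perpendicular segment from gcon c to a point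
         of gbus b, containing no other connector and meeting no other bus *)
  (forall b c, E b c ->
     let q := foot (gbus G b) (gcon G c) in
     [/\ on_gseg (gbus G b) q,
         (forall c', c' != c -> ~~ in_seg (gcon G c) q (gcon G c')) &
         (forall b' p, b' != b -> in_seg (gcon G c) q p -> ~~ on_gseg (gbus G b') p)]) /\
  (forall b1 b2, b1 != b2 -> forall p, ~~ (on_gseg (gbus G b1) p && on_gseg (gbus G b2) p)) /\
  (forall c1 c2, c1 != c2 -> gcon G c1 != gcon G c2) /\
  (forall b c, ~~ on_gseg (gbus G b) (gcon G c)).

Definition parallel (s t : gseg) : Prop := horiz s = horiz t.

Definition perp (Bt Ct : finType) (E : Bt -> Ct -> bool)
  (A A' B B' C : Bt) (x y z : Ct) : Prop :=
  [/\ uniq [:: A; A'; B; B'; C], uniq [:: x; y; z],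
      [/\ E A x, E A' x, E B x & E B' x],
      [/\ E A y, E A' y, E B y & E C y] &
      [/\ E A z, E A' z, E B' z & E C z]].

Definition flipper (Bt Ct : finType) (E : Bt -> Ct -> bool)
  (A A' B B' C : Bt) (x y z o : Ct) : Prop :=
  [/\ perp E A A' B B' C x y z, o \notin [:: x; y; z], E B o & E B' o].

(* G contains an (I,O)-chain: vertex-disjoint copies of an (I,o1)-flipper,
   an (I1,o2)-flipper, an (I2,o3)-flipper and an (I3,O)-perp, plus edges
   (I1,o1), (I2,o2), (I3,o3). *)
Definition has_chain (Bt Ct : finType) (E : Bt -> Ct -> bool) (I O : Bt) : Prop :=
  exists (A1 A1' B1' C1 : Bt) (x1 y1 z1 o1 : Ct)
         (I1 A2 A2' B2' C2 : Bt) (x2 y2 z2 o2 : Ct)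
         (I2 A3 A3' B3' C3 : Bt) (x3 y3 z3 o3 : Ct)
         (I3 A4' B4' C4 : Bt) (x4 y4 z4 : Ct),
    [/\ flipper E A1 A1' I B1' C1 x1 y1 z1 o1,
        flipper E A2 A2' I1 B2' C2 x2 y2 z2 o2,
        flipper E A3 A3' I2 B3' C3 x3 y3 z3 o3,
        perp E I3 A4' O B4' C4 x4 y4 z4 &
        [/\ uniq [:: A1; A1'; I; B1'; C1; A2; A2'; I1; B2'; C2;
                  A3; A3'; I2; B3'; C3; I3; A4'; O; B4'; C4],
            uniq [:: x1; y1; z1; o1; x2; y2; z2; o2; x3; y3; z3; o3; x4; y4; z4],
            E I1 o1, E I2 o2 & E I3 o3]].

(* Main.v *)
Require Import Defs.
From mathcomp Require Import all_boot all_order all_algebra.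
From mathcomp Require Import zify.
Import Order.TTheory GRing.Theory Num.Theory.
Set Implicit Arguments. Unset Strict Implicit.

Definition dd (Bt Ct : finType) (G : drawing Bt Ct) b c : int :=
  if horiz (gbus G b) then (line (gbus G b) - (gcon G c).2)%R
  else (line (gbus G b) - (gcon G c).1)%R.

Lemma opp (Bt Ct : finType) (E : Bt -> Ct -> bool) (G : drawing Bt Ct)
  b1 b2 c : realization E G -> E b1 c -> E b2 c -> b1 != b2 ->
  horiz (gbus G b1) = horiz (gbus G b2) ->
  (0 < dd G b1 c)%R = ~~ (0 < dd G b2 c)%R.
Proof.
move=> [_ [Hedge [Hdisj [_ Hcon]]]] e1 e2 ne hh.
have [o1 nc1 nb1] := Hedge _ _ e1.
have [o2 nc2 nb2] := Hedge _ _ e2.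
have d12 := Hdisj _ _ ne.
have n1 := Hcon b1 c. have n2 := Hcon b2 c.
have ne' : b2 != b1 by rewrite eq_sym.
have s1 := nb1 b2 (foot (gbus G b2) (gcon G c)) ne'.
have s2 := nb2 b1 (foot (gbus G b1) (gcon G c)) ne.
move: o1 o2 d12 n1 n2 s1 s2 {nc1 nc2 nb1 nb2 Hedge Hdisj Hcon ne'}.
rewrite /dd -hh.
case: (gcon G c) => cx cy.
case: (gbus G b1) hh => [h1 l1 lo1 hi1]; case: (gbus G b2) => [h2 l2 lo2 hi2] /= hh.
subst h2.
rewrite /on_gseg /foot /in_seg.
case: h1 => /= o1 o2 d12 n1 n2 s1 s2.
- have := d12 (cx, l1). have := d12 (cx, l2). move: o1 o2 n1 n2 s1 s2 => /=.
  case: (ltrP 0 (l1 - cy)); case: (ltrP 0 (l2 - cy)) => /=; lia.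
- have := d12 (l1, cy). have := d12 (l2, cy). move: o1 o2 n1 n2 s1 s2 => /=.
  case: (ltrP 0 (l1 - cx)); case: (ltrP 0 (l2 - cx)) => /=; lia.
Qed.

Ltac splitb := repeat match goal with H : is_true (_ && _) |- _ => case/andP: H => ? ? end.
Ltac neqs := solve [assumption | rewrite eq_sym; assumption].

Lemma no3 (Bt Ct : finType) (E : Bt -> Ct -> bool) (G : drawing Bt Ct)
  b1 b2 b3 c : realization E G -> E b1 c -> E b2 c -> E b3 c ->
  b1 != b2 -> b2 != b3 -> b1 != b3 ->
  ~~ ((horiz (gbus G b1) == horiz (gbus G b2)) && (horiz (gbus G b2) == horiz (gbus G b3))).
Proof.
move=> R e1 e2 e3 n12 n23 n13; apply/negP => /andP[/eqP h12 /eqP h23].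
have := opp R e1 e2 n12 h12; have := opp R e2 e3 n23 h23.
have := opp R e1 e3 n13 (etrans h12 h23).
by case: (0 < dd G b1 c)%R; case: (0 < dd G b2 c)%R; case: (0 < dd G b3 c)%R.
Qed.

Lemma perp_lem (Bt Ct : finType) (E : Bt -> Ct -> bool) (G : drawing Bt Ct)
  A A' B B' C x y z : realization E G -> perp E A A' B B' C x y z ->
  horiz (gbus G A) = ~~ horiz (gbus G B) /\ horiz (gbus G B) = horiz (gbus G B').
Proof.
move=> R [U _ [ax a'x bx b'x] [ay a'y b_y cy] [az a'z b'z cz]].
rewrite /= !inE !negb_or in U; splitb.
have := no3 R ax a'x bx ltac:(neqs) ltac:(neqs) ltac:(neqs).
have := no3 R ax a'x b'x ltac:(neqs) ltac:(neqs) ltac:(neqs).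
have := no3 R ax bx b'x ltac:(neqs) ltac:(neqs) ltac:(neqs).
have := no3 R a'x bx b'x ltac:(neqs) ltac:(neqs) ltac:(neqs).
have := no3 R ay a'y b_y ltac:(neqs) ltac:(neqs) ltac:(neqs).
have := no3 R ay a'y cy ltac:(neqs) ltac:(neqs) ltac:(neqs).
have := no3 R ay b_y cy ltac:(neqs) ltac:(neqs) ltac:(neqs).
have := no3 R a'y b_y cy ltac:(neqs) ltac:(neqs) ltac:(neqs).
have := no3 R az a'z b'z ltac:(neqs) ltac:(neqs) ltac:(neqs).
have := no3 R az a'z cz ltac:(neqs) ltac:(neqs) ltac:(neqs).
have := no3 R az b'z cz ltac:(neqs) ltac:(neqs) ltac:(neqs).
have := no3 R a'z b'z cz ltac:(neqs) ltac:(neqs) ltac:(neqs).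
case: (horiz (gbus G A)); case: (horiz (gbus G A')); case: (horiz (gbus G B));
  case: (horiz (gbus G B')); case: (horiz (gbus G C)) => //.
Qed.

Lemma flip_lem (Bt Ct : finType) (E : Bt -> Ct -> bool) (G : drawing Bt Ct)
  A A' B B' C x y z o D : realization E G -> flipper E A A' B B' C x y z o ->
  E D o -> D != B -> D != B' -> horiz (gbus G D) = ~~ horiz (gbus G B).
Proof.
move=> R [P _ bo b'o] Do n1 n2.
have [_ hb] := perp_lem R P.
have nbb : B != B' by case: P => U _ _ _ _; rewrite /= !inE !negb_or in U; splitb.
have := no3 R bo b'o Do nbb ltac:(neqs) ltac:(neqs).
rewrite -hb; by case: (horiz (gbus G B)); case: (horiz (gbus G D)).
Qed.

Theorem lemma6 (Bt Ct : finType) (E : Bt -> Ct -> bool) (I O : Bt) :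
  bus_graph E -> has_chain E I O ->
  forall G : drawing Bt Ct, realization E G -> parallel (gbus G I) (gbus G O).
Proof.
move=> _ [A1 [A1' [B1' [C1 [x1 [y1 [z1 [o1 [I1 [A2 [A2' [B2' [C2 [x2 [y2 [z2 [o2 [I2 [A3 [A3' [B3' [C3 [x3 [y3 [z3 [o3 [I3 [A4' [B4' [C4 [x4 [y4 [z4 [F1 F2 F3 P4 [U _ e1 e2 e3]]]]]]]]]]]]]]]]]]]]]]]]]]]]]]]]]]] G R.
rewrite /= !inE !negb_or in U; splitb.
have h1 := flip_lem R F1 e1 ltac:(neqs) ltac:(neqs).
have h2 := flip_lem R F2 e2 ltac:(neqs) ltac:(neqs).
have h3 := flip_lem R F3 e3 ltac:(neqs) ltac:(neqs).
have [h4 _] := perp_lem R P4.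
rewrite /parallel.
move: h1 h2 h3 h4.
case: (horiz (gbus G I)); case: (horiz (gbus G I1)); case: (horiz (gbus G I2));
  case: (horiz (gbus G I3)); case: (horiz (gbus G O)) => //.
Qed.
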